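(* Let $h\ge 2$ be an integer and $\lambda_G,\lambda_L,\gamma>0$. Let $S=\{(a,b): a\ge 1,\ b\ge 1,\ a+b\le h\}\cup\{(0,1)^\ast\}$ and let $\mathbf{P}=(p_{s,t})_{s,t\in S}$, $\Phi=(\phi_{s,t})_{s,t\in S}$ be the matrices whose only non-zero entries are as follows: for $(a,b)\in S$ with $a\ge 1$, $p_{(a,b),(a-1,b+1)}=\frac{a\lambda_L}{a\lambda_L+\gamma}$ and $\phi_{(a,b),(a-1,b+1)}=\frac{a\lambda_L}{b(a\lambda_L+\gamma)}$ if $a>1$; $p_{(1,b),(0,1)^\ast}=\frac{\lambda_L}{\lambda_L+\gamma}$ and $\phi_{(1,b),(0,1)^\ast}=\frac{\lambda_L}{b(\lambda_L+\gamma)}$; $p_{(a,b),(a,b-1)}=\frac{(b-1)\gamma}{b(a\lambda_L+\gamma)}$ if $b\ge 2$; $\phi_{(a,b),(h-1,1)}=\frac{\lambda_G}{b(a\lambda_L+\gamma)}$; and $\phi_{(0,1)^\ast,(h-1,1)}=\lambda_G/\gamma$ (the row of $\mathbf{P}$ indexed by $(0,1)^\ast$ is zero). Let $\mathbf{M}=(\mathbf{I}-\mathbf{P})^{-1}\Phi$ and $\mu_G=\lambda_G/\gamma$. For $i=0,\ldots,h-1$ let $\mu_i$ be the mean number of infectives in generation $i$ of the single-household epidemic described in the context, and let $\mathbf{A}$ be the $h\times h$ matrix with first column $(\mu_G\mu_0,\mu_G\mu_1,\ldots,\mu_G\mu_{h-1})^\top$, entries $A_{i,i+1}=1$ for $i=1,\ldots,h-1$,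 and all other entries $0$. Then the largest (Perron–Frobenius) eigenvalue of $\mathbf{M}$ equals the largest eigenvalue of $\mathbf{A}$; that is, the basic reproduction number $R_0$ defined as the maximal eigenvalue of $\mathbf{M}$ coincides with the generational basic reproduction number $R_0^g$ (the maximal eigenvalue of $\mathbf{A}$).
   Context: Markovian SIR household epidemic: the population is partitioned into households of size $h$. Each infective remains infectious for an exponentially distributed time with rate $\gamma$ (independently); whilst infectious it makes global contacts at rate $\lambda_G$ with individuals chosen uniformly from the (large) population, each such contact in the early stages creating a new infectious household in state $(h-1,1)$, and makes contacts with each other given member of its household at rate $\lambda_L$; contacted susceptibles immediately become infectious. A state $(a,b)$ denotes a household with $a$ susceptibles and $b$ infectives; states with no susceptibles are amalgamated into $(0,1)^\ast$. $\mathbf{M}$ is the mean reproduction matrix: $m_{s,t}$ is the mean number of type-$t$ infectives generated by an individual infected as a member of a type-$s$ infectious unit. Single-household epidemic and generations: in a household with one initial infective and $h-1$ susceptibles evolving with local contacts only, the initial infective is in generation $0$, and an individual infected by a generation-$(i-1)$ infective is in generation $i$; $\mu_i$ is the expected number of generation-$i$ infectives. *)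

(* Defs.v *)
From HB Require Import structures.
From mathcomp Require Import all_boot all_order all_algebra.
From mathcomp Require Import reals.
Set Implicit Arguments. Unset Strict Implicit. Unset Printing Implicit Defensive.
Import Order.TTheory GRing.Theory Num.Theory.
Local Open Scope ring_scope.

Definition Sab (h : nat) :=
  {x : 'I_h.+1 * 'I_h.+1 | [&& (0 < x.1)%N, (0 < x.2)%N & (x.1 + x.2 <= h)%N]}.
(* None stands for the amalgamated state (0,1)^* . *)
Definition Stype (h : nat) := option (Sab h).

Definition sa h (x : Sab h) : nat := (sval x).1.
Definition sb h (x : Sab h) : nat := (sval x).2.

Section Matrices.
Variables (R : realType) (h : nat) (lG lL g : R).

Definition Pent (s t : Stype h) : R :=
  match s with
  | None => 0
  | Some x =>
    let a := sa x in let b := sb x in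
    match t with
    | None => if a == 1%N then lL / (lL + g) else 0
    | Some y =>
      let a' := sa y in let b' := sb y in
      (if [&& (1 < a)%N, a' == a.-1 & b' == b.+1]
       then a%:R * lL / (a%:R * lL + g) else 0)
      + (if [&& (2 <= b)%N, a' == a & b' == b.-1]
         then (b.-1)%:R * g / (b%:R * (a%:R * lL + g)) else 0)
    end
  end.

Definition Phient (s t : Stype h) : R :=
  match s with
  | None =>
    match t with
    | None => 0
    | Some y => if (sa y == h.-1) && (sb y == 1%N) then lG / g else 0
    end
  | Some x =>
    let a := sa x in let b := sb x in
    match t with
    | None => if a == 1%N then lL / (b%:R * (lL + g)) else 0
    | Some y =>
      let a' := sa y in let b' := sb y in
      (if [&& (1 < a)%N, a' == a.-1 & b' == b.+1]
       then a%:R * lL / (b%:R * (a%:R * lL + g)) else 0)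
      + (if (a' == h.-1) && (b' == 1%N)
         then lG / (b%:R * (a%:R * lL + g)) else 0)
    end
  end.

Definition nS := #|{: Stype h}|.

Definition Pmx : 'M[R]_nS :=
  \matrix_(i, j) Pent (enum_val i) (enum_val j).
Definition Phimx : 'M[R]_nS :=
  \matrix_(i, j) Phient (enum_val i) (enum_val j).

Definition Mmx : 'M[R]_nS := invmx (1%:M - Pmx) *m Phimx.

(* State of the embedded jump chain: a = number of susceptibles,
   b j = number of currently infectious individuals of generation j.
   Events: an infective of generation j infects one of the a susceptibles
   (total rate b j * a * lL), creating a generation-(j+1) infective; or an
   infective of generation j recovers (total rate b j * g).
   Egen k i a b = expected number of generation-i infections occurring
   from state (a,b) onwards (k = fuel, 2h suffices). *)
Definition incr (b : nat -> nat) (j : nat) : nat -> nat :=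
  fun k => if k == j then (b k).+1 else b k.
Definition decr (b : nat -> nat) (j : nat) : nat -> nat :=
  fun k => if k == j then (b k).-1 else b k.

Fixpoint Egen (k i a : nat) (b : nat -> nat) : R :=
  match k with
  | O => 0
  | k'.+1 =>
    let tot := (\sum_(j < h) b j)%N in
    if tot == 0%N then 0 else
    let rate := tot%:R * (a%:R * lL + g) in
    \sum_(j < h) ((b j)%:R * a%:R * lL / rate) *
                 ((j.+1 == i)%:R + Egen k' i a.-1 (incr b j.+1))
    + \sum_(j < h) ((b j)%:R * g / rate) * Egen k' i a (decr b j)
  end.

Definition b_init : nat -> nat := fun k => if k == 0%N then 1%N else 0%N.

Definition mu (i : nat) : R :=
  (i == 0%N)%:R + Egen (2 * h) i h.-1 b_init.

Definition muG : R := lG / g.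

(* A: first column (muG mu_0, ..., muG mu_{h-1}), A_{i,i+1} = 1 (1-indexed);
   here 0-indexed. *)
Definition Amx : 'M[R]_h :=
  \matrix_(i, j) (if (j : nat) == 0%N then muG * mu i
                  else if (j : nat) == i.+1 then 1 else 0).

End Matrices.

(* Main.v *)
Require Import Defs.
From HB Require Import structures.
From mathcomp Require Import all_boot all_order all_algebra.
From mathcomp Require Import reals.
From mathcomp Require Import zify ring lra.
Import Order.TTheory GRing.Theory Num.Theory.
Local Open Scope ring_scope.
Set Implicit Arguments. Unset Strict Implicit. Unset Printing Implicit Defensive.

Section Gen.
Variables (R : realType) (h : nat) (lL g : R).
Hypotheses (hlL : 0 < lL) (hg : 0 < g).

Fixpoint Qf (n d a B : nat) : R :=
  match n with
  | O => 0
  | n'.+1 =>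
    if B == 0%N then 0 else
    (a%:R * lL * (d == 1%N)%:R + B%:R * a%:R * lL * Qf n' d a.-1 B.+1
     + a%:R * lL * Qf n' d.-1 a.-1 B.+1 + B.-1%:R * g * Qf n' d a B.-1)
    / (B%:R * (a%:R * lL + g))
  end.

Definition Q d a B := Qf (2 * a + B) d a B.

Lemma Q_rec d a B : (0 < a)%N -> (0 < B)%N ->
  Q d a B =
  (a%:R * lL * (d == 1%N)%:R + B%:R * a%:R * lL * Q d a.-1 B.+1
     + a%:R * lL * Q d.-1 a.-1 B.+1 + B.-1%:R * g * Q d a B.-1)
    / (B%:R * (a%:R * lL + g)).
Proof.
move=> a0 B0; rewrite /Q.
have -> : (2 * a + B = (2 * a.-1 + B.+1).+1)%N by lia.
have -> : (2 * a + B.-1 = 2 * a.-1 + B.+1)%N by lia.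
simpl. have -> : (B == 0%N) = false by lia.
by [].
Qed.

Lemma Qf_a0 n d B : Qf n d 0 B = 0.
Proof.
elim: n d B => [//|n IH] d B /=.
by case: (B == 0%N) => //; rewrite !IH !(mul0r, mulr0, add0r, addr0).
Qed.

Lemma Q_a0 d B : Q d 0 B = 0.
Proof. exact: Qf_a0. Qed.

Lemma Q_B0 d a : Q d a 0 = 0.
Proof. by rewrite /Q; case: (2 * a + 0)%N. Qed.

Lemma Qf_d0 n a B : Qf n 0 a B = 0.
Proof.
elim: n a B => [//|n IH] a B /=.
by case: (B == 0%N) => //; rewrite !IH !mulr0 !addr0 mul0r.
Qed.

Lemma Q_d0 a B : Q 0 a B = 0.
Proof. exact: Qf_d0. Qed.

Lemma Qf_big n d a B : (a < d)%N -> Qf n d a B = 0.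
Proof.
elim: n d a B => [//|n IH] d a B ad /=.
case: (B == 0%N) => //.
case: a ad => [|a] ad.
  by rewrite [Qf n d 0 B.-1]IH // !mulr0n !(mul0r, mulr0, add0r, addr0).
have -> : (d == 1%N) = false by apply/negbTE; lia.
rewrite !IH //; try lia.
by rewrite !mulr0 !addr0 mul0r.
Qed.

Lemma Q_big d a B : (a < d)%N -> Q d a B = 0.
Proof. exact: Qf_big. Qed.

Lemma Qf_ge0 n d a B : 0 <= Qf n d a B.
Proof.
elim: n d a B => [//|n IH] d a B /=.
case: (B == 0%N) => //.
apply: divr_ge0; last by apply: mulr_ge0 => //; apply: addr_ge0;
  [apply: mulr_ge0 => //; exact: ltW | exact: ltW].
have l0 := ltW hlL; have g0 := ltW hg.
repeat apply: addr_ge0; repeat apply: mulr_ge0 => //.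
Qed.

Lemma Q_ge0 d a B : 0 <= Q d a B.
Proof. exact: Qf_ge0. Qed.


Definition tot (b : nat -> nat) := (\sum_(j < h) b j)%N.

Lemma le_tot (b : nat -> nat) (j : 'I_h) : (b j <= tot b)%N.
Proof. by rewrite /tot (bigD1 j) //= leq_addr. Qed.

Lemma tot0 (b : nat -> nat) (j : 'I_h) : tot b = 0%N -> b j = 0%N.
Proof. by move=> t0; have := le_tot b j; rewrite t0 leqn0 => /eqP. Qed.

Lemma tot_incr (b : nat -> nat) m : (m < h)%N -> tot (incr b m) = (tot b).+1.
Proof.
move=> hm; rewrite /tot (bigD1 (Ordinal hm)) //= [in RHS](bigD1 (Ordinal hm)) //=.
rewrite /incr eqxx addSn; congr (_.+1); congr (_ + _)%N.
by apply: eq_bigr => i /negbTE; rewrite -val_eqE /= => ->.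
Qed.

Lemma tot_decr (b : nat -> nat) j : (j < h)%N -> (0 < b j)%N -> tot (decr b j) = (tot b).-1.
Proof.
move=> hj bj; rewrite /tot (bigD1 (Ordinal hj)) //= [in RHS](bigD1 (Ordinal hj)) //=.
rewrite /decr eqxx.
have -> : (\sum_(i < h | i != Ordinal hj) (if i == j :> nat then (b i).-1 else b i))%N
   = (\sum_(i < h | i != Ordinal hj) b i)%N.
  by apply: eq_bigr => i /negbTE; rewrite -val_eqE /= => ->.
by case: (b j) bj => // n _; rewrite addSn.
Qed.

Lemma sum_incr (b : nat -> nat) m (F : nat -> R) : (m < h)%N ->
  \sum_(l < h) (incr b m l)%:R * F l = \sum_(l < h) (b l)%:R * F l + F m.
Proof.
move=> hm; rewrite (bigD1 (Ordinal hm)) //= [in RHS](bigD1 (Ordinal hm)) //=.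
rewrite /incr eqxx mulrSr mulrDl mul1r.
have -> : \sum_(i < h | i != Ordinal hm) (if i == m :> nat then (b i).+1 else b i)%:R * F i
   = \sum_(i < h | i != Ordinal hm) (b i)%:R * F i.
  by apply: eq_bigr => i /negbTE; rewrite -val_eqE /= => ->.
by rewrite addrAC.
Qed.

Lemma sum_decr (b : nat -> nat) j (F : nat -> R) : (j < h)%N -> (0 < b j)%N ->
  \sum_(l < h) (decr b j l)%:R * F l = \sum_(l < h) (b l)%:R * F l - F j.
Proof.
move=> hj bj; rewrite (bigD1 (Ordinal hj)) //= [in RHS](bigD1 (Ordinal hj)) //=.
rewrite /decr eqxx.
have -> : \sum_(i < h | i != Ordinal hj) (if i == j :> nat then (b i).-1 else b i)%:R * F i
   = \sum_(i < h | i != Ordinal hj) (b i)%:R * F i.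
  by apply: eq_bigr => i /negbTE; rewrite -val_eqE /= => ->.
rewrite -{2}(prednK bj) mulrSr mulrDl mul1r.
by rewrite addrAC addrK.
Qed.

Lemma Egen_a0 k i (b : nat -> nat) : Egen h lL g k i 0 b = 0.
Proof.
elim: k b => [//|k IH] b /=.
case: (_ == 0%N) => //.
rewrite big1 => [|j _]; last by rewrite mulr0n mulr0 !mul0r.
rewrite big1 => [|j _]; last by rewrite IH mulr0.
by rewrite addr0.
Qed.

Lemma Egen_Q k i a (b : nat -> nat) :
  (2 * a + tot b <= k)%N ->
  (forall j, (j < h)%N -> (0 < b j)%N -> (j + a < h)%N) ->
  Egen h lL g k i a b = \sum_(j < h) (b j)%:R * Q (i - j) a (tot b).
Proof.
elim: k a b => [|k IH] a b.
  move=> Hk _; have t0 : tot b = 0%N by lia.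
  by rewrite /= big1 // => j _; rewrite (tot0 j t0) mul0r.
move=> Hk Hinv.
rewrite [LHS]/= -/(tot b).
case: eqP => [t0|tn0].
  by rewrite big1 // => j _; rewrite (tot0 j t0) mul0r.
case: a Hk Hinv => [|a] Hk Hinv.
  rewrite big1 => [|j _]; last by rewrite mulr0n mulr0 !mul0r.
  rewrite big1 => [|j _]; last by rewrite Egen_a0 mulr0.
  by rewrite big1 ?addr0 // => j _; rewrite Q_a0 mulr0.
set B := tot b.
set rate := (B%:R * (a.+1%:R * lL + g)).
set Q1 := fun l => Q (i - l) a B.+1.
set Q2 := fun l => Q (i - l) a.+1 B.-1.
set S1 := \sum_(l < h) (b l)%:R * Q1 l.
set S2 := \sum_(l < h) (b l)%:R * Q2 l.
have E1 : forall j : 'I_h, (b j)%:R * a.+1%:R * lL / rate *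
      ((j.+1 == i)%:R + Egen h lL g k i a.+1.-1 (incr b j.+1))
    = (b j)%:R * a.+1%:R * lL / rate * ((j.+1 == i)%:R + S1 + Q (i - j.+1) a B.+1).
  move=> j; case: (posnP (b j)) => [->|bj0]; first by rewrite mulr0n !mul0r.
  have hj1 : (j.+1 < h)%N by have := Hinv j (ltn_ord j) bj0; lia.
  rewrite IH /=.
  - by rewrite tot_incr // (@sum_incr b j.+1 (fun l => Q (i - l) a B.+1)) // addrA.
  - rewrite tot_incr //; lia.
  - move=> l hl; rewrite /incr; case: eqP => [->|_] ?; first by have := Hinv j (ltn_ord j) bj0; lia.
    have := Hinv l hl; lia.
have E2 : forall j : 'I_h, (b j)%:R * g / rate * Egen h lL g k i a.+1 (decr b j)
    = (b j)%:R * g / rate * (S2 - Q (i - j) a.+1 B.-1).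
  move=> j; case: (posnP (b j)) => [->|bj0]; first by rewrite mulr0n !mul0r.
  rewrite IH /=.
  - by rewrite tot_decr // (@sum_decr b j (fun l => Q (i - l) a.+1 B.-1)).
  - rewrite tot_decr //; lia.
  - move=> l hl; rewrite /decr; case: eqP => [->|_] ?; first by have := Hinv j (ltn_ord j) bj0; lia.
    by have := Hinv l hl; lia.
rewrite (eq_bigr _ (fun j _ => E1 j)) (eq_bigr _ (fun j _ => E2 j)).
have B0 : (0 < B)%N by rewrite lt0n; apply/eqP.
set K := (a.+1%:R * lL * S1 + g * S2) / rate.
set C := fun j : nat => (a.+1%:R * lL * (j.+1 == i)%:R + a.+1%:R * lL * Q (i - j.+1) a B.+1
   - g * Q2 j) / rate.
have L1 : forall j : 'I_h, (b j)%:R * a.+1%:R * lL / rate *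
     ((j.+1 == i)%:R + S1 + Q (i - j.+1) a B.+1) +
     (b j)%:R * g / rate * (S2 - Q (i - j) a.+1 B.-1)
   = (b j)%:R * C j + (b j)%:R * K.
  by move=> j; rewrite /C /K /Q2; ring.
rewrite -big_split /= (eq_bigr _ (fun j _ => L1 j)) big_split /= -mulr_suml -natr_sum -/(tot b) -/B.
have L2 : forall j : 'I_h, (b j)%:R * Q (i - j) a.+1 B
   = (b j)%:R * C j + B%:R / rate * ((b j)%:R * (a.+1%:R * lL * Q1 j + g * Q2 j)).
  move=> j; rewrite Q_rec //= /C /Q1 /Q2 -/rate subnS.
  have -> : (i - j == 1)%N = (j.+1 == i) by apply/eqP/eqP; lia.
  have -> : B.-1%:R = B%:R - 1 :> R by rewrite -{2}(prednK B0) mulrSr addrK.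
  ring.
rewrite (eq_bigr _ (fun j _ => L2 j)) big_split /= -mulr_sumr.
congr (_ + _).
rewrite /K /S1 /S2.
rewrite [X in _ = _ * X](_ : _ = a.+1%:R * lL * (\sum_(i0 < h) (b i0)%:R * Q1 i0) + g * \sum_(i0 < h) (b i0)%:R * Q2 i0).
  by rewrite mulrA mulrAC.
rewrite !mulr_sumr -big_split /=; apply: eq_bigr => j _; ring.
Qed.


Lemma mu_Q i : (0 < h)%N -> mu h lL g i = (i == 0%N)%:R + Q i h.-1 1.
Proof.
move=> h0; have tb : tot b_init = 1%N.
  rewrite /tot (bigD1 (Ordinal h0)) //= big1 // => j /negbTE.
  by rewrite -val_eqE /= /b_init => ->.
rewrite /mu Egen_Q; last first.
- by move=> j _; rewrite /b_init; case: eqP => [->|//] _; lia.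
- rewrite tb; lia.
congr (_ + _); rewrite tb (bigD1 (Ordinal h0)) //= big1.
  by rewrite /b_init /= subn0 mul1r addr0.
by move=> j /negbTE; rewrite -val_eqE /= /b_init => ->; rewrite mul0r.
Qed.

Definition W (x : R) a B := 1 + \sum_(k < h) Q k a B / x ^+ k.

Lemma W_a0 x B : W x 0 B = 1.
Proof. by rewrite /W big1 ?addr0 // => k _; rewrite Q_a0 mul0r. Qed.

Lemma W_rec x a B : x != 0 -> (2 <= h)%N -> (0 < a)%N -> (0 < B)%N -> (a < h)%N ->
  B%:R * (a%:R * lL + g) * W x a B =
  B%:R * a%:R * lL * W x a.-1 B.+1 + B.-1%:R * g * W x a B.-1 + g
  + a%:R * lL * W x a.-1 B.+1 / x.
Proof.
move=> x0 h2 a0 B0 ah.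
have lg0 : a%:R * lL + g != 0.
  rewrite gt_eqF //.
  by apply: ltr_wpDl => //; apply: mulr_ge0 => //; exact: ltW.
have Bn0 : B%:R != 0 :> R by rewrite pnatr_eq0 -lt0n.
have [n hn] : exists n, h = n.+2 by exists (h - 2)%N; lia.
rewrite /W hn mulrDr mulr1 mulr_sumr.
have E : forall k : 'I_n.+2, B%:R * (a%:R * lL + g) * (Q k a B / x ^+ k) =
  (a%:R * lL * (k == 1%N :> nat)%:R) / x ^+ k + B%:R * a%:R * lL * (Q k a.-1 B.+1 / x ^+ k)
  + a%:R * lL * (Q k.-1 a.-1 B.+1 / x ^+ k) + B.-1%:R * g * (Q k a B.-1 / x ^+ k).
  move=> k; rewrite Q_rec //; field.
  by rewrite expf_neq0 // lg0 Bn0.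
rewrite (eq_bigr _ (fun k _ => E k)) !big_split /= -!mulr_sumr.
have E1 : \sum_(k < n.+2) a%:R * lL * (k == 1%N :> nat)%:R / x ^+ k = a%:R * lL / x.
  rewrite (bigD1 (@Ordinal n.+2 1 isT)) //= big1 ?addr0; first by rewrite mulr1 expr1.
  by move=> k /negbTE; rewrite -val_eqE /= => ->; rewrite mulr0 mul0r.
have E2 : \sum_(k < n.+2) Q k a.-1 B.+1 / x ^+ k = \sum_(k < n.+1) Q k a.-1 B.+1 / x ^+ k.
  rewrite big_ord_recr /= (@Q_big n.+1); first by rewrite mul0r addr0.
  by clear -ah hn; lia.
have E3 : \sum_(k < n.+2) Q k.-1 a.-1 B.+1 / x ^+ k = (\sum_(k < n.+1) Q k a.-1 B.+1 / x ^+ k) / x.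
  rewrite big_ord_recl /= Q_d0 mul0r add0r mulr_suml; apply: eq_bigr => k _.
  rewrite add0n /bump leq0n add1n exprS invfM; field.
  by rewrite x0 expf_neq0.
rewrite E1 E2 E3.
have -> : B.-1%:R = B%:R - 1 :> R by rewrite -{2}(prednK B0) mulrSr addrK.
by field.
Qed.

End Gen.

Lemma sum_option (R : nmodType) (T : finType) (F : option T -> R) :
  \sum_(t : option T) F t = F None + \sum_(y : T) F (Some y).
Proof.
rewrite (bigD1 None) //=; congr (_ + _).
case: (pickP T) => [y0 _ | T0].
  rewrite (reindex_onto Some (fun t => if t is Some y then y else y0)) /=.
    apply: eq_bigl => y. by rewrite eqxx.
  by case.
rewrite big1; last by case=> [y|//]; have := T0 y.
by rewrite big1 // => y; have := T0 y.
Qed.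

Section Types.
Variable h : nat.

Definition toS (a B : nat) : Stype h := insub (inord a, inord B).

Lemma Sab_valid (y : Sab h) : [/\ (0 < sa y)%N, (0 < sb y)%N & (sa y + sb y <= h)%N].
Proof. by rewrite /sa /sb; have /and3P[? ? ?] := svalP y; split. Qed.

Lemma toS_Some (y : Sab h) : toS (sa y) (sb y) = Some y.
Proof.
rewrite /toS /sa /sb !inord_val.
have -> : ((sval y).1, (sval y).2) = val y by case: y => [[u v] p].
exact: valK.
Qed.

Lemma inord_pos a : (0 < (@inord h a : nat))%N -> (a <= h)%N.
Proof.
case: (leqP a h) => // ha.
by rewrite /inord /insubd insubF //=; apply/negbTE; rewrite -ltnNge.
Qed.

Lemma toS_inv a B (y : Sab h) : toS a B = Some y -> sa y = a /\ sb y = B.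
Proof.
rewrite /toS; case: insubP => // u /and3P[pa pb _] vu [<-].
rewrite /sa /sb; have -> : sval u = val u by [].
rewrite vu /= !inordK //; apply/inord_pos => //.
Qed.

Lemma toS_a0 B : toS 0 B = None.
Proof. by rewrite /toS insubF // /= (@inordK h 0). Qed.

Lemma toS_valid a B : (0 < a)%N -> (0 < B)%N -> (a + B <= h)%N ->
  exists y, toS a B = Some y.
Proof.
move=> a0 B0 aB; rewrite /toS; case: insubP => [u _ _|]; first by exists u.
by rewrite /= !inordK ?a0 ?B0 ?aB //; lia.
Qed.

End Types.

Section Sums.
Variables (R : realType) (h : nat) (lG lL g : R).

Lemma sum_pick (F : Stype h -> R) a' b' :
  \sum_(y : Sab h) (if (sa y == a') && (sb y == b') then F (Some y) else 0)
  = if toS h a' b' is Some _ then F (toS h a' b') else 0.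
Proof.
case E: (toS h a' b') => [y0|].
  have [e1 e2] := toS_inv E.
  rewrite (bigD1 y0) //= e1 e2 !eqxx /=.
  rewrite big1 ?addr0 // => y /negbTE yy0.
  case: ifP => // /andP[/eqP ea /eqP eb].
  by move: E; rewrite -ea -eb toS_Some => -[e]; rewrite e eqxx in yy0.
rewrite big1 // => y _; case: ifP => // /andP[/eqP ea /eqP eb].
by move: E; rewrite -ea -eb toS_Some.
Qed.

Lemma ifmul (c : bool) (k v : R) : (if c then k else 0) * v = if c then k * v else 0.
Proof. by case: c; rewrite ?mul0r. Qed.

Lemma sumP_None (z : Stype h -> R) : \sum_t Pent lL g None t * z t = 0.
Proof. by rewrite big1 // => t _; rewrite mul0r. Qed.

Lemma sumPhi_None (z : Stype h -> R) : (2 <= h)%N ->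
  \sum_t Phient lG lL g None t * z t = lG / g * z (toS h h.-1 1).
Proof.
move=> h2; rewrite sum_option /= mul0r add0r.
rewrite (eq_bigr (fun y => if (sa y == h.-1) && (sb y == 1%N) then lG / g * z (Some y) else 0)); last first.
  by move=> y _; rewrite ifmul.
rewrite (sum_pick (fun s => lG / g * z s)); have [y ->] := @toS_valid h h.-1 1 ltac:(lia) isT ltac:(lia).
by [].
Qed.

Lemma sumP_y (z : Stype h -> R) (y : Sab h) :
  \sum_t Pent lL g (Some y) t * z t =
  (sa y)%:R * lL / ((sa y)%:R * lL + g) * z (toS h (sa y).-1 (sb y).+1)
  + (sb y).-1%:R * g / ((sb y)%:R * ((sa y)%:R * lL + g)) * z (toS h (sa y) (sb y).-1).
Proof.
have [a0 b0 ab] := Sab_valid y.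
rewrite sum_option /=.
set a := sa y; set b := sb y.
under eq_bigr => y' _ do rewrite mulrDl !ifmul.
rewrite big_split /=.
case: (ltnP 1 a) => a1.
  have a1' : (a == 1%N) = false by apply/negbTE; lia.
  rewrite a1' mul0r add0r /=.
  rewrite (eq_bigr (fun y' => if (sa y' == a.-1) && (sb y' == b.+1) then a%:R * lL / (a%:R * lL + g) * z (Some y') else 0)) //.
  rewrite (sum_pick (fun s => a%:R * lL / (a%:R * lL + g) * z s)); have [y1 E1] := @toS_valid h a.-1 b.+1 ltac:(lia) isT ltac:(lia).
  rewrite E1 -E1; congr (_ + _).
  case: (ltnP 1 b) => b1.
    rewrite (eq_bigr (fun y' => if (sa y' == a) && (sb y' == b.-1) then b.-1%:R * g / (b%:R * (a%:R * lL + g)) * z (Some y') else 0)) //.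
    rewrite (sum_pick (fun s => b.-1%:R * g / (b%:R * (a%:R * lL + g)) * z s)); have [y2 E2] := @toS_valid h a b.-1 ltac:(lia) ltac:(lia) ltac:(lia).
    by rewrite E2 -E2.
  have -> : b = 1%N by lia.
  by rewrite big1 //= !mul0r.
have -> : a = 1%N by lia.
rewrite eqxx /= big1 ?addr0; last by move=> y' _.
rewrite toS_a0 /= add0r !mul1r; congr (_ + _).
case: (ltnP 1 b) => b1.
  rewrite (eq_bigr (fun y' => if (sa y' == 1%N) && (sb y' == b.-1) then b.-1%:R * g / (b%:R * (lL + g)) * z (Some y') else 0)) //.
  rewrite (sum_pick (fun s => b.-1%:R * g / (b%:R * (lL + g)) * z s)); have [y2 E2] := @toS_valid h 1 b.-1 ltac:(lia) ltac:(lia) ltac:(lia).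
  by rewrite E2 -E2.
have -> : b = 1%N by lia.
by rewrite big1 //= !mul0r.
Qed.


Lemma sumPhi_y (z : Stype h -> R) (y : Sab h) : (2 <= h)%N ->
  \sum_t Phient lG lL g (Some y) t * z t =
  (sa y)%:R * lL / ((sb y)%:R * ((sa y)%:R * lL + g)) * z (toS h (sa y).-1 (sb y).+1)
  + lG / ((sb y)%:R * ((sa y)%:R * lL + g)) * z (toS h h.-1 1).
Proof.
move=> h2; have [a0 b0 ab] := Sab_valid y.
rewrite sum_option /=.
set a := sa y; set b := sb y.
under eq_bigr => y' _ do rewrite mulrDl !ifmul.
rewrite big_split /=.
rewrite [X in _ + (_ + X)](eq_bigr (fun y' => if (sa y' == h.-1) && (sb y' == 1%N) then lG / (b%:R * (a%:R * lL + g)) * z (Some y') else 0)) //.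
rewrite (sum_pick (fun s => lG / (b%:R * (a%:R * lL + g)) * z s)).
have [y3 E3] := @toS_valid h h.-1 1 ltac:(lia) isT ltac:(lia).
rewrite E3 -E3 addrA; congr (_ + _).
case: (ltnP 1 a) => a1.
  have a1' : (a == 1%N) = false by apply/negbTE; lia.
  rewrite a1' mul0r add0r /=.
  rewrite (eq_bigr (fun y' => if (sa y' == a.-1) && (sb y' == b.+1) then a%:R * lL / (b%:R * (a%:R * lL + g)) * z (Some y') else 0)) //.
  rewrite (sum_pick (fun s => a%:R * lL / (b%:R * (a%:R * lL + g)) * z s)).
  have [y1 E1] := @toS_valid h a.-1 b.+1 ltac:(lia) isT ltac:(lia).
  by rewrite E1 -E1.
have -> : a = 1%N by lia.
rewrite eqxx /= big1 ?addr0; last by move=> y' _.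
by rewrite toS_a0 /= !mul1r.
Qed.

End Sums.

Lemma kerR (R : fieldType) n (A : 'M[R]_n) :
  A \notin unitmx -> exists2 v : 'cV_n, A *m v = 0 & v != 0.
Proof.
move=> nu; have : kermx A^T != 0.
  by rewrite kermx_eq0 row_free_unit unitmx_tr.
case/rowV0Pn => u /sub_kermxP uA u0; exists u^T.
  by rewrite -[A]trmxK -trmx_mul uA trmx0.
by apply: contra u0 => /eqP u0; apply/eqP; rewrite -[u]trmxK u0 trmx0.
Qed.

Lemma eigR (R : fieldType) n (A : 'M[R]_n) x :
  eigenvalue A x <-> exists2 v : 'cV_n, A *m v = x *: v & v != 0.
Proof.
split.
  move=> ev; have nu : (A - x%:M) \notin unitmx.
    by move: ev; rewrite /eigenvalue /eigenspace -row_free_unit -kermx_eq0.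
  have [v Av v0] := kerR nu; exists v => //.
  by apply/eqP; rewrite -subr_eq0 -mul_scalar_mx -mulmxBl Av.
case=> v Av v0; rewrite /eigenvalue /eigenspace kermx_eq0 row_free_unit.
apply/negP => un; move/negP: v0; apply.
have : (A - x%:M) *m v = 0 by rewrite mulmxBl mul_scalar_mx Av subrr.
move/(congr1 (mulmx (invmx (A - x%:M)))); rewrite mulmxA mulVmx // mul1mx mulmx0.
by move=> ->.
Qed.

Section Mx.
Variables (R : realType) (h : nat) (lG lL g : R).

Lemma sum_enum (F : Stype h -> R) : \sum_(j < nS h) F (enum_val j) = \sum_t F t.
Proof. by rewrite -(big_enum_val F). Qed.

Lemma Phi_entry (zc : 'cV[R]_(nS h)) i :
  (Phimx h lG lL g *m zc) i 0 = \sum_t Phient lG lL g (enum_val i) t * zc (enum_rank t) 0.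
Proof.
rewrite mxE -sum_enum; apply: eq_bigr => j _; by rewrite mxE enum_valK.
Qed.

Lemma IP_entry (zc : 'cV[R]_(nS h)) i :
  ((1%:M - Pmx h lL g) *m zc) i 0 = zc i 0 - \sum_t Pent lL g (enum_val i) t * zc (enum_rank t) 0.
Proof.
rewrite mulmxBl mul1mx mxE [X in _ + X]mxE; congr (_ - _).
rewrite mxE -sum_enum; apply: eq_bigr => j _; by rewrite mxE enum_valK.
Qed.


Lemma rec_zero (e : Stype h -> R) (c1 c2 : Sab h -> R) :
  e None = 0 ->
  (forall y, e (Some y) = c1 y * e (toS h (sa y).-1 (sb y).+1)
                          + (sb y).-1%:R * c2 y * e (toS h (sa y) (sb y).-1)) ->
  forall s, e s = 0.
Proof.
move=> eN ey.
suff H : forall n (y : Sab h), (2 * sa y + sb y <= n)%N -> e (Some y) = 0.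
  by case=> // y; apply: (H _ y (leqnn _)).
elim=> [|n IH] y.
  by have [a0 _ _] := Sab_valid y; lia.
move=> hy; rewrite ey; have [a0 b0 _] := Sab_valid y.
have T1 : e (toS h (sa y).-1 (sb y).+1) = 0.
  case E: (toS h _ _) => [y1|//]; have [e1 e2] := toS_inv E; apply: IH; lia.
have T2 : (sb y).-1%:R * c2 y * e (toS h (sa y) (sb y).-1) = 0.
  case: (ltnP 1 (sb y)) => b1.
    case E: (toS h _ _) => [y1|]; last by rewrite eN mulr0.
    have [e1 e2] := toS_inv E; rewrite IH ?mulr0 //; lia.
  have -> : (sb y).-1 = 0%N by lia.
  by rewrite !mul0r.
by rewrite T1 mulr0 T2 addr0.
Qed.

Lemma unitIP : (1%:M - Pmx h lL g) \in unitmx.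
Proof.
apply/negPn/negP => nu; have [v Av v0] := kerR nu.
pose e := fun t : Stype h => (v (enum_rank t) 0 : R).
have Ee : forall s, e s = \sum_t Pent lL g s t * e t.
  move=> s; have := congr1 (fun M : 'cV[R]_(nS h) => M (enum_rank s) 0) Av.
  rewrite IP_entry enum_rankK mxE => /eqP; rewrite subr_eq0 => /eqP.
  by [].
have eN : e None = 0 by rewrite Ee sumP_None.
have ez : forall s, e s = 0.
  apply: (@rec_zero e (fun y => (sa y)%:R * lL / ((sa y)%:R * lL + g))
   (fun y => g / ((sb y)%:R * ((sa y)%:R * lL + g))) eN).
  by move=> y; rewrite Ee sumP_y; congr (_ + _); rewrite mulrA.
move/negP: v0; apply; apply/eqP/matrixP => i j; rewrite ord1 mxE.
by have := ez (enum_val i); rewrite /e enum_valK.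
Qed.

End Mx.

Section Main.
Variables (R : realType) (h : nat) (lG lL g : R).
Hypotheses (h2 : (2 <= h)%N) (hlG : 0 < lG) (hlL : 0 < lL) (hg : 0 < g).

Definition F (x : R) := muG lG g * \sum_(k < h) mu h lL g k / x ^+ k.

Lemma h0 : (0 < h)%N. Proof. by apply: leq_trans h2. Qed.

Lemma WF x : W h lL g x h.-1 1 = \sum_(k < h) mu h lL g k / x ^+ k.
Proof.
rewrite /W; under [RHS]eq_bigr => k _ do rewrite (mu_Q hlL hg _ h0) mulrDl.
rewrite big_split /=; congr (_ + _).
rewrite (bigD1 (Ordinal h0)) //= expr0 invr1 mulr1 big1 ?addr0 //.
by move=> k /negbTE; rewrite -val_eqE /= => ->; rewrite mul0r.
Qed.

Definition zf (x : R) (s : Stype h) : R :=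
  match s with None => 1 | Some y => W h lL g x (sa y) (sb y) end.

Lemma zf_toS x a B : (a = 0%N \/ [/\ (0 < a)%N, (0 < B)%N & (a + B <= h)%N]) ->
  zf x (toS h a B) = W h lL g x a B.
Proof.
case=> [->|[a0 B0 aB]]; first by rewrite toS_a0 W_a0.
have [y E] := toS_valid a0 B0 aB; have [e1 e2] := toS_inv E.
by rewrite E /= e1 e2.
Qed.

Lemma zf_rec x (y : Sab h) : x != 0 ->
  (sb y)%:R * ((sa y)%:R * lL + g) * zf x (Some y) =
  (sb y)%:R * (sa y)%:R * lL * zf x (toS h (sa y).-1 (sb y).+1)
  + (sb y).-1%:R * g * zf x (toS h (sa y) (sb y).-1) + g
  + (sa y)%:R * lL * zf x (toS h (sa y).-1 (sb y).+1) / x.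
Proof.
have [a0 b0 ab] := Sab_valid y.
have E1 : zf x (toS h (sa y).-1 (sb y).+1) = W h lL g x (sa y).-1 (sb y).+1.
  apply: zf_toS; case: (ltnP 1 (sa y)) => a1. right; split; clear x; lia. left; clear x; lia.
have E2 : (sb y).-1%:R * g * zf x (toS h (sa y) (sb y).-1)
        = (sb y).-1%:R * g * W h lL g x (sa y) (sb y).-1.
  case: (ltnP 1 (sb y)) => b1.
    by rewrite zf_toS //; right; split; lia.
  have -> : (sb y).-1 = 0%N by lia.
  by rewrite !mul0r.
move=> x0; rewrite E1 E2 /= W_rec //; clear x0; lia.
Qed.


Definition EqS x (z : Stype h -> R) s :=
  \sum_t Phient lG lL g s t * z t = x * (z s - \sum_t Pent lL g s t * z t).

Lemma eq_mx x (zc : 'cV[R]_(nS h)) (z : Stype h -> R) :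
  (forall t, zc (enum_rank t) 0 = z t) ->
  (Phimx h lG lL g *m zc = x *: ((1%:M - Pmx h lL g) *m zc)) <-> forall s, EqS x z s.
Proof.
move=> Hz; have Hs : forall s, \sum_t Phient lG lL g s t * zc (enum_rank t) 0
     = \sum_t Phient lG lL g s t * z t by move=> s; apply: eq_bigr => t _; rewrite Hz.
have Hp : forall s, \sum_t Pent lL g s t * zc (enum_rank t) 0
     = \sum_t Pent lL g s t * z t by move=> s; apply: eq_bigr => t _; rewrite Hz.
split.
  move=> E s; have := congr1 (fun M : 'cV[R]_(nS h) => M (enum_rank s) 0) E.
  by rewrite /= Phi_entry mxE IP_entry enum_rankK Hs Hp Hz.
move=> E; apply/matrixP => i j; rewrite ord1 [RHS]mxE Phi_entry IP_entry Hs Hp.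
by rewrite -(enum_valK i) Hz enum_valK; apply: E.
Qed.

Lemma Mx_eig x (zc : 'cV[R]_(nS h)) :
  (Mmx h lG lL g *m zc = x *: zc) <-> (Phimx h lG lL g *m zc = x *: ((1%:M - Pmx h lL g) *m zc)).
Proof.
have U := unitIP h lL g; rewrite /Mmx.
split => E.
  by rewrite scalemxAr -E !mulmxA mulmxV // mul1mx.
by rewrite -mulmxA E -scalemxAr mulmxA mulVmx // mul1mx.
Qed.

Lemma Bc0 (y : Sab h) : (sb y)%:R * ((sa y)%:R * lL + g) != 0.
Proof.
have [a0 b0 ab] := Sab_valid y.
rewrite mulf_neq0 // ?pnatr_eq0 -?lt0n // gt_eqF //.
by apply: ltr_wpDl => //; apply: mulr_ge0 => //; exact: ltW.
Qed.

Lemma c0 (y : Sab h) : ((sa y)%:R * lL + g) != 0.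
Proof.
rewrite gt_eqF //.
by apply: ltr_wpDl => //; apply: mulr_ge0 => //; exact: ltW.
Qed.

Lemma b0R (y : Sab h) : (sb y)%:R != 0 :> R.
Proof. by have [a0 b0 ab] := Sab_valid y; rewrite pnatr_eq0 -lt0n. Qed.

Lemma eigM_of_F x : 0 < x -> F x = x -> eigenvalue (Mmx h lG lL g) x.
Proof.
move=> x0 Fx; have xn0 : x != 0 by rewrite gt_eqF.
apply/eigR; exists (\col_j zf x (enum_val j)); last first.
  apply/negP => /eqP /matrixP /(_ (enum_rank None) 0); rewrite !mxE enum_rankK /=.
  by move/eqP; rewrite oner_eq0.
apply/Mx_eig/(@eq_mx x _ (zf x)); first by move=> t; rewrite mxE enum_rankK.
have Ht0 : lG / g * zf x (toS h h.-1 1) = x.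
  rewrite zf_toS; last by right; split; clear -h2; lia.
  by rewrite WF -[RHS]Fx /F /muG.
case=> [y|]; rewrite /EqS; last by rewrite sumPhi_None // sumP_None subr0 /= mulr1.
rewrite sumPhi_y // sumP_y.
have cc := c0 y; have bb := b0R y.
move: (zf_rec y xn0) Ht0 cc bb.
move: (zf x (Some y)) (zf x (toS h (sa y).-1 (sb y).+1)) (zf x (toS h (sa y) (sb y).-1)) (zf x (toS h h.-1 1)) => z0 z1 z2 zt.
move: ((sa y)%:R) ((sb y)%:R) ((sb y).-1%:R) => a b b1 R1 Ht0 cc bb.
have Hz0 : z0 = (b * a * lL * z1 + b1 * g * z2 + g + a * lL * z1 / x) / (b * (a * lL + g)).
  by rewrite -R1; field; rewrite cc bb.
have Hzt : zt = x * g / lG.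
  by rewrite -Ht0; field; rewrite !gt_eqF.
rewrite Hz0 Hzt; field.
by rewrite cc bb xn0 !gt_eqF.
Qed.

Lemma F_of_eigM x : 0 < x -> eigenvalue (Mmx h lG lL g) x -> F x = x.
Proof.
move=> x0 /eigR [zc Mz zc0]; have xn0 : x != 0 by rewrite gt_eqF.
pose z := fun t : Stype h => (zc (enum_rank t) 0 : R).
have E := (proj1 (@eq_mx x zc z (fun t => erefl))) (proj1 (Mx_eig x zc) Mz).
pose al := z None.
have EN := E None; rewrite /EqS sumPhi_None // sumP_None subr0 in EN.
pose e := fun t => z t - al * zf x t.
have ez : forall s, e s = 0.
  apply: (@rec_zero R h e (fun y => (sa y)%:R * lL / ((sa y)%:R * lL + g)
      + (sa y)%:R * lL / (x * ((sb y)%:R * ((sa y)%:R * lL + g))))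
      (fun y => g / ((sb y)%:R * ((sa y)%:R * lL + g)))).
    by rewrite /e /= mulr1 subrr.
  move=> y; have Ey := E (Some y); rewrite /EqS sumPhi_y // sumP_y in Ey.
  have R1 := zf_rec y xn0; rewrite /e.
  have cc := c0 y; have bb := b0R y.
  move: Ey EN R1 cc bb; rewrite -/al; clear e.
  move: (z (Some y)) (z (toS h (sa y).-1 (sb y).+1)) (z (toS h (sa y) (sb y).-1)) (z (toS h h.-1 1)) => w0 w1 w2 wt.
  move: (zf x (Some y)) (zf x (toS h (sa y).-1 (sb y).+1)) (zf x (toS h (sa y) (sb y).-1)) => f0 f1 f2.
  move: ((sa y)%:R) ((sb y)%:R) ((sb y).-1%:R) al => a b b1 al' Ey EN R1 cc bb.
  have Hw0 : w0 = (a * lL / (b * (a * lL + g)) * w1 + lG / (b * (a * lL + g)) * wt) / x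
       + a * lL / (a * lL + g) * w1 + b1 * g / (b * (a * lL + g)) * w2.
    rewrite Ey; field; by rewrite cc bb xn0.
  have Hwt : wt = x * al' * g / lG.
    by rewrite -EN; field; rewrite !gt_eqF.
  have Hf0 : f0 = (b * a * lL * f1 + b1 * g * f2 + g + a * lL * f1 / x) / (b * (a * lL + g)).
    by rewrite -R1; field; rewrite cc bb.
  rewrite Hw0 Hwt Hf0; field.
  by rewrite cc bb xn0 !gt_eqF.
have zz : forall s, z s = al * zf x s by move=> s; apply/eqP; rewrite -subr_eq0; apply/eqP/ez.
have al0 : al != 0.
  apply/negP => /eqP al0; move/negP: zc0; apply; apply/eqP/matrixP => i j.
  rewrite ord1 mxE -(enum_valK i); have := zz (enum_val i); by rewrite al0 mul0r.
move: EN; rewrite zz zf_toS; last by right; split; clear -h2; lia.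
rewrite WF /F /muG => EN.
apply: (mulIf al0); rewrite -EN -/al; ring.
Qed.


Lemma A_col0 (v : 'rV[R]_h) :
  (v *m Amx h lG lL g) 0 (Ordinal h0) = muG lG g * \sum_(k < h) v 0 k * mu h lL g k.
Proof.
rewrite mxE mulr_sumr; apply: eq_bigr => k _; by rewrite mxE /= mulrCA.
Qed.

Lemma A_colS (v : 'rV[R]_h) j (hj : (j.+1 < h)%N) :
  (v *m Amx h lG lL g) 0 (Ordinal hj) = v 0 (Ordinal (ltnW hj)).
Proof.
rewrite mxE (bigD1 (Ordinal (ltnW hj))) //= mxE /= eqxx mulr1 big1 ?addr0 //.
move=> k /negbTE; rewrite -val_eqE /= mxE /= eqSS eq_sym => ->; by rewrite mulr0.
Qed.

Lemma eigA_of_F x : 0 < x -> F x = x -> eigenvalue (Amx h lG lL g) x.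
Proof.
move=> x0 Fx; have xn0 : x != 0 by rewrite gt_eqF.
apply/eigenvalueP; exists (\row_(k < h) (x ^+ k)^-1); last first.
  apply/negP => /eqP /matrixP /(_ 0 (Ordinal h0)); rewrite !mxE /= expr0 invr1.
  by move/eqP; rewrite oner_eq0.
apply/matrixP => i j; rewrite ord1 [RHS]mxE [in RHS]mxE.
case: j => [[|j] hj].
  have -> : Ordinal hj = Ordinal h0 by apply: val_inj.
  rewrite A_col0 /= expr0 invr1 mulr1 -[RHS]Fx /F; congr (_ * _).
  by apply: eq_bigr => k _; rewrite mxE mulrC.
rewrite A_colS mxE /= exprS invfM mulrA divff ?mul1r //.
Qed.

Lemma F_of_eigA x : 0 < x -> eigenvalue (Amx h lG lL g) x -> F x = x.
Proof.
move=> x0 /eigenvalueP [v vA v0]; have xn0 : x != 0 by rewrite gt_eqF.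
have Hv : forall k (hk : (k < h)%N), v 0 (Ordinal hk) = (x ^+ k)^-1 * v 0 (Ordinal h0).
  elim => [|k IH] hk.
    by rewrite expr0 invr1 mul1r; congr (v 0); apply: val_inj.
  have := congr1 (fun M : 'rV[R]_h => M 0 (Ordinal hk)) vA.
  rewrite /= A_colS mxE IH => E.
  apply: (mulfI xn0); rewrite -E exprS invfM; field.
  by rewrite expf_neq0.
have Hv' : forall k : 'I_h, v 0 k = (x ^+ k)^-1 * v 0 (Ordinal h0).
  by case=> k hk; exact: Hv.
have v00 : v 0 (Ordinal h0) != 0.
  apply/negP => /eqP e0; move/negP: v0; apply; apply/eqP/matrixP => i j.
  by rewrite ord1 mxE Hv' e0 mulr0.
have := congr1 (fun M : 'rV[R]_h => M 0 (Ordinal h0)) vA.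
rewrite /= A_col0 mxE => E.
apply: (mulIf v00); rewrite -E /F -mulrA; congr (_ * _).
rewrite mulr_suml; apply: eq_bigr => k _; rewrite [v 0 k]Hv'.
by move: (v 0 (Ordinal h0)) => c; rewrite /=; ring.
Qed.

Lemma mu_ge0 k : 0 <= mu h lL g k.
Proof. by rewrite (mu_Q hlL hg _ h0); apply: addr_ge0; [exact: ler0n | exact: Q_ge0]. Qed.

Lemma mu0 : mu h lL g 0 = 1.
Proof. by rewrite (mu_Q hlL hg _ h0) Q_d0 addr0. Qed.

Lemma muG_gt0 : 0 < muG lG g.
Proof. by rewrite /muG divr_gt0. Qed.

Lemma F_anti x y : 0 < y -> y <= x -> F x <= F y.
Proof.
move=> y0 yx; rewrite /F; apply: ler_wpM2l; first exact: ltW muG_gt0.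
apply: ler_sum => k _; apply: ler_wpM2l; first exact: mu_ge0.
have x0 : 0 < x by apply: lt_le_trans yx.
rewrite lef_pV2 ?posrE ?exprn_gt0 //.
by apply: lerXn2r => //; rewrite nnegrE ltW.
Qed.

Lemma sum_ge1 x : 0 < x -> 1 <= \sum_(k < h) mu h lL g k / x ^+ k.
Proof.
move=> x0; rewrite (bigD1 (Ordinal h0)) //= mu0 expr0 invr1 mulr1.
rewrite lerDl; apply: sumr_ge0 => k _; apply: divr_ge0; first exact: mu_ge0.
by rewrite exprn_ge0 // ltW.
Qed.

Lemma F_ge x : 0 < x -> muG lG g <= F x.
Proof.
move=> x0; rewrite /F -{1}(mulr1 (muG lG g)); apply: ler_wpM2l; first exact: ltW muG_gt0.
exact: sum_ge1.
Qed.

Lemma F_le x : 1 <= x -> F x <= muG lG g * \sum_(k < h) mu h lL g k.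
Proof.
move=> x1; rewrite /F; apply: ler_wpM2l; first exact: ltW muG_gt0.
apply: ler_sum => k _; rewrite -{2}(mulr1 (mu h lL g k)); apply: ler_wpM2l; first exact: mu_ge0.
by rewrite invf_le1 ?exprn_ege1 // exprn_gt0 // (lt_le_trans ltr01).
Qed.


Lemma F_fix : exists2 r, 0 < r & F r = r.
Proof.
set S := muG lG g * \sum_(k < h) mu h lL g k.
pose p : {poly R} := 'X^h - muG lG g *: \sum_(k < h) mu h lL g k *: 'X^(h.-1 - k).
have pval : forall x, 0 < x -> p.[x] = x ^+ h.-1 * (x - F x).
  move=> x x0; have xn0 : x != 0 by rewrite gt_eqF.
  rewrite /p hornerD hornerN hornerZ horner_sum hornerXn /F.
  rewrite mulrBr -exprSr (prednK h0); congr (_ - _).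
  rewrite mulrCA; congr (_ * _); rewrite mulr_sumr; apply: eq_bigr => k _.
  rewrite hornerZ hornerXn expfB_cond; first by rewrite mulrCA.
  by rewrite (negbTE xn0) add0n -ltnS (prednK h0).
have S0 : muG lG g <= S.
  rewrite /S -{1}(mulr1 (muG lG g)); apply: ler_wpM2l; first exact: ltW muG_gt0.
  have := sum_ge1 ltr01; congr (_ <= _); apply: eq_bigr => k _.
  by rewrite expr1n invr1 mulr1.
have m0 := muG_gt0.
have [r /andP[r1 r2] rr] : exists2 r, muG lG g <= r <= 1 + S & root p r.
  apply: poly_ivt.
    by apply: le_trans S0 _; rewrite lerDr.
  apply/andP; split.
    rewrite pval // pmulr_rle0 ?exprn_gt0 // subr_le0; exact: F_ge.
  have b1 : 1 <= 1 + S by rewrite lerDl; apply: le_trans S0; exact: ltW.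
  rewrite pval ?(lt_le_trans ltr01) // pmulr_rge0 ?exprn_gt0 ?(lt_le_trans ltr01) // subr_ge0.
  by apply: le_trans (F_le b1) _; rewrite lerDr ler01.
have r0 : 0 < r by apply: lt_le_trans r1.
exists r => //; move: rr; rewrite /root pval // mulf_eq0 expf_eq0 (gt_eqF r0) andbF /=.
by rewrite subr_eq0 => /eqP <-.
Qed.

End Main.

Unset Implicit Arguments.

Theorem mainTheorem3 (R : realType) (h : nat) (lG lL g : R) :
  (2 <= h)%N -> 0 < lG -> 0 < lL -> 0 < g ->
  exists r : R,
    [/\ eigenvalue (Mmx h lG lL g) r,
        eigenvalue (Amx h lG lL g) r,
        (forall x : R, eigenvalue (Mmx h lG lL g) x -> x <= r) &
        (forall x : R, eigenvalue (Amx h lG lL g) x -> x <= r)].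
Proof.
move=> h2 hG hL hg.
have [r r0 Fr] := F_fix h2 hG hL hg.
have bound : forall x, (0 < x -> F h lG lL g x = x) -> x <= r.
  move=> x Hx; case: (lerP x 0) => [x0|x0]; first exact: le_trans x0 (ltW r0).
  rewrite leNgt; apply/negP => rx.
  have := F_anti h2 hG hL hg r0 (ltW rx); rewrite Hx // Fr => xr.
  by move: (lt_le_trans rx xr); rewrite ltxx.
exists r; split.
- exact: eigM_of_F.
- exact: eigA_of_F.
- move=> x ex; apply: bound => x0; exact: F_of_eigM.
- move=> x ex; apply: bound => x0; exact: F_of_eigA.
Qed.
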